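(* The following decision problem is undecidable: given a transition system $T=(V,\mathit{Init},\mathit{TR})$ and a safety property $P$, all expressed in QFLIA, decide whether there exists an inductive invariant for $T$ and $P$ that is itself a QFLIA formula over $V$. In other words, there is no algorithm that, on every such input $(T,P)$, correctly answers whether a QFLIA inductive invariant for $T$ and $P$ exists.
   Context: QFLIA (quantifier-free linear integer arithmetic) formulas are built from integer-valued variables, integer constants, addition, multiplication by integer constants, the relations $=,<,\le$, and Boolean connectives, with no quantifiers; all variables range over $\mathbb{Z}$. A transition system is a tuple $T=(V,\mathit{Init},\mathit{TR})$ where $V$ is a finite set of integer variables, $\mathit{Init}$ is a QFLIA formula over $V$, and $\mathit{TR}$ is a QFLIA formula over $V\uplus V'$, where $V'=\{v' : v\in V\}$ is a primed copy of $V$. A state is an assignment $V\to\mathbb{Z}$. The initial states are those satisfying $\mathit{Init}$. A pair of states $(s,t)$ is a transition if $\mathit{TR}$ holds when unprimed variables take their values from $s$ and primed variables from $t$. Reachable states are those reachable from an initial state by finitely many transitions. A safety property is a QFLIA formula $P$ over $V$. We write $T\models P$ if every reachable state satisfies $P$. An inductive invariant for $T$ and $P$ is a formula $I$ over $V$ such that: (i) $\mathit{Init}\to I$ is valid; (ii) $I\wedge \mathit{TR}\to I'$ is valid, where $I'$ is obtained from $I$ by replacing each $v\in V$ with $v'$; and (iii) $I\to P$ is valid. *)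

(* Defs.v *)
From Stdlib Require Import ZArith List Arith.
Import ListNotations.
Open Scope Z_scope.

Inductive term : Type :=
| TVar (v : nat)
| TConst (c : Z)
| TAdd (a b : term)
| TMul (c : Z) (a : term).

Inductive formula : Type :=
| FEq (a b : term)
| FLt (a b : term)
| FLe (a b : term)
| FTrue
| FFalse
| FNot (f : formula)
| FAnd (f g : formula)
| FOr (f g : formula)
| FImp (f g : formula).

Fixpoint teval (rho : nat -> Z) (t : term) : Z :=
  match t with
  | TVar v => rho v
  | TConst c => c
  | TAdd a b => teval rho a + teval rho b
  | TMul c a => c * teval rho a
  end.

Fixpoint sat (rho : nat -> Z) (f : formula) : Prop :=
  match f with
  | FEq a b => teval rho a = teval rho b
  | FLt a b => teval rho a < teval rho b
  | FLe a b => teval rho a <= teval rho b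
  | FTrue => True
  | FFalse => False
  | FNot g => ~ sat rho g
  | FAnd g h => sat rho g /\ sat rho h
  | FOr g h => sat rho g \/ sat rho h
  | FImp g h => sat rho g -> sat rho h
  end.

Fixpoint term_over (k : nat) (t : term) : Prop :=
  match t with
  | TVar v => (v < k)%nat
  | TConst _ => True
  | TAdd a b => term_over k a /\ term_over k b
  | TMul _ a => term_over k a
  end.

Fixpoint formula_over (k : nat) (f : formula) : Prop :=
  match f with
  | FEq a b | FLt a b | FLe a b => term_over k a /\ term_over k b
  | FTrue | FFalse => True
  | FNot g => formula_over k g
  | FAnd g h | FOr g h | FImp g h => formula_over k g /\ formula_over k h
  end.

(* Priming: with V = {0,...,n-1}, the primed copy v' of v is n + v. *)
Fixpoint prime_term (n : nat) (t : term) : term :=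
  match t with
  | TVar v => TVar (n + v)
  | TConst c => TConst c
  | TAdd a b => TAdd (prime_term n a) (prime_term n b)
  | TMul c a => TMul c (prime_term n a)
  end.

Fixpoint prime_formula (n : nat) (f : formula) : formula :=
  match f with
  | FEq a b => FEq (prime_term n a) (prime_term n b)
  | FLt a b => FLt (prime_term n a) (prime_term n b)
  | FLe a b => FLe (prime_term n a) (prime_term n b)
  | FTrue => FTrue
  | FFalse => FFalse
  | FNot g => FNot (prime_formula n g)
  | FAnd g h => FAnd (prime_formula n g) (prime_formula n h)
  | FOr g h => FOr (prime_formula n g) (prime_formula n h)
  | FImp g h => FImp (prime_formula n g) (prime_formula n h)
  end.

Definition valid (f : formula) : Prop := forall rho : nat -> Z, sat rho f.

(* Transition system with variables V = {0,...,nv-1}, primed copy {nv,...,2nv-1}. *)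
Record TS : Type := mkTS { nv : nat; Init : formula; TR : formula }.

Definition ts_wf (T : TS) : Prop :=
  formula_over (nv T) (Init T) /\ formula_over (2 * nv T) (TR T).

Definition inductive_invariant (T : TS) (P I : formula) : Prop :=
  formula_over (nv T) I /\
  valid (FImp (Init T) I) /\
  valid (FImp (FAnd I (TR T)) (prime_formula (nv T) I)) /\
  valid (FImp I P).

Definition input_wf (T : TS) (P : formula) : Prop :=
  ts_wf T /\ formula_over (nv T) P.

Definition has_QFLIA_invariant (T : TS) (P : formula) : Prop :=
  exists I : formula, inductive_invariant T P I.

Definition npair (a b : nat) : nat := ((a + b) * (a + b + 1)) / 2 + b.

Definition encZ (z : Z) : nat :=
  if (0 <=? z)%Z then (2 * Z.to_nat z)%nat else (2 * Z.to_nat (- z) - 1)%nat.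

Fixpoint enc_term (t : term) : nat :=
  match t with
  | TVar v => npair 0 v
  | TConst c => npair 1 (encZ c)
  | TAdd a b => npair 2 (npair (enc_term a) (enc_term b))
  | TMul c a => npair 3 (npair (encZ c) (enc_term a))
  end.

Fixpoint enc_formula (f : formula) : nat :=
  match f with
  | FEq a b => npair 0 (npair (enc_term a) (enc_term b))
  | FLt a b => npair 1 (npair (enc_term a) (enc_term b))
  | FLe a b => npair 2 (npair (enc_term a) (enc_term b))
  | FTrue => npair 3 0
  | FFalse => npair 4 0
  | FNot g => npair 5 (enc_formula g)
  | FAnd g h => npair 6 (npair (enc_formula g) (enc_formula h))
  | FOr g h => npair 7 (npair (enc_formula g) (enc_formula h))
  | FImp g h => npair 8 (npair (enc_formula g) (enc_formula h))
  end.

Definition enc_input (T : TS) (P : formula) : nat :=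
  npair (nv T) (npair (enc_formula (Init T)) (npair (enc_formula (TR T)) (enc_formula P))).

Inductive recf : Type :=
| RZero
| RSucc
| RProj (i : nat)
| RComp (f : recf) (gs : list recf)
| RPrimRec (f g : recf)
| RMu (f : recf).

(* Big-step semantics: reval f args y  means  f(args) converges with value y. *)
Inductive reval : recf -> list nat -> nat -> Prop :=
| ev_zero : forall args, reval RZero args 0
| ev_succ : forall x args, reval RSucc (x :: args) (S x)
| ev_proj : forall i args, reval (RProj i) args (nth i args 0%nat)
| ev_comp : forall f gs args ys y,
    reval_list gs args ys -> reval f ys y -> reval (RComp f gs) args y
| ev_prim0 : forall f g args y,
    reval f args y -> reval (RPrimRec f g) (0%nat :: args) y
| ev_primS : forall f g k args r y,
    reval (RPrimRec f g) (k :: args) r ->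
    reval g (k :: r :: args) y ->
    reval (RPrimRec f g) (S k :: args) y
| ev_mu : forall f args y,
    reval f (y :: args) 0 ->
    (forall k, (k < y)%nat -> exists m, reval f (k :: args) (S m)) ->
    reval (RMu f) args y
with reval_list : list recf -> list nat -> list nat -> Prop :=
| evl_nil : forall args, reval_list [] args []
| evl_cons : forall g gs args y ys,
    reval g args y -> reval_list gs args ys -> reval_list (g :: gs) args (y :: ys).

Definition decides_invariant_existence (f : recf) : Prop :=
  forall (T : TS) (P : formula), input_wf T P ->
    (has_QFLIA_invariant T P -> reval f [enc_input T P] 1%nat) /\
    (~ has_QFLIA_invariant T P -> reval f [enc_input T P] 0%nat).

(* Main.v *)
Require Import Defs.
From Stdlib Require Import ZArith List Arith.
From Stdlib Require Import ZArith List Arith Lia Classical.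
Import ListNotations.
Open Scope nat_scope.

Inductive instr := ISet (r : nat) (c : Z) | ICopy (r s : nat) (c : Z) | IJz (r a : nat) | IJmp (a : nat).

Fixpoint compl (cf : recf -> list nat -> nat -> nat -> nat -> list instr) (gs : list recf)
  (args : list nat) (t b p : nat) : list instr :=
  match gs with
  | [] => []
  | g :: gs' => let c := cf g args t b p in c ++ compl cf gs' args (S t) b (p + length c)
  end.

Fixpoint comp (f : recf) (args : list nat) (out base p : nat) : list instr :=
 match f with
 | RZero => [ISet out 0%Z]
 | RSucc => match args with a :: _ => [ICopy out a 1%Z] | [] => [ISet out 0%Z] end
 | RProj i => match nth_error args i with Some a => [ICopy out a 0%Z] | None => [ISet out 0%Z] end
 | RComp f0 gs => let cl := compl comp gs args base (base + length gs) p in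
     cl ++ comp f0 (seq base (length gs)) out (base + length gs) (p + length cl)
 | RPrimRec f0 g0 => match args with [] => [ISet out 0%Z] | kr :: rr =>
     let cf := comp f0 rr (S base) (base+4) (p+2) in let H := p + 2 + length cf in
     let cg := comp g0 (base :: S base :: rr) (base+3) (base+4) (S H) in
     ISet base 0 :: ICopy (base+2) kr 0 :: cf ++ IJz (base+2) (S H + length cg + 4) :: cg ++
       [ICopy (S base) (base+3) 0; ICopy base base 1; ICopy (base+2) (base+2) (-1); IJmp H; ICopy out (S base) 0] end
 | RMu f0 => let cf := comp f0 (base :: args) (S base) (base+2) (S p) in
     ISet base 0 :: cf ++ [IJz (S base) (S p + length cf + 3); ICopy base base 1; IJmp (S p); ICopy out base 0]
 end.

Definition state := nat -> Z.

Definition exec (i : instr) (s : state) : state := fun v =>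
 match i with
 | ISet r c => if Nat.eqb v 0 then (s 0%nat + 1)%Z else if Nat.eqb v r then c else s v
 | ICopy r x c => if Nat.eqb v 0 then (s 0%nat + 1)%Z else if Nat.eqb v r then (s x + c)%Z else s v
 | IJz r a => if Nat.eqb v 0 then (if Z.eqb (s r) 0 then Z.of_nat a else (s 0%nat + 1)%Z) else s v
 | IJmp a => if Nat.eqb v 0 then Z.of_nat a else s v
 end.

Definition step (prog : list instr) (s t : state) : Prop :=
  exists i ins, s 0 = Z.of_nat i /\ nth_error prog i = Some ins /\ t = exec ins s.

Inductive star (prog : list instr) : state -> state -> Prop :=
| star_refl : forall s, star prog s s
| star_step : forall s t u, step prog s t -> star prog t u -> star prog s u.

Lemma star_trans : forall prog a b c, star prog a b -> star prog b c -> star prog a c.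
Proof. intros prog a b c H; induction H; intros; auto. eapply star_step; eauto. Qed.

Definition code_at (prog : list instr) (p : nat) (code : list instr) : Prop :=
  forall j ins, nth_error code j = Some ins -> nth_error prog (p + j) = Some ins.

Lemma code_at_app : forall prog p a b, code_at prog p (a ++ b) ->
  code_at prog p a /\ code_at prog (p + length a) b.
Proof.
  unfold code_at; intros; split; intros.
  - apply H. rewrite nth_error_app1; auto. apply nth_error_Some. congruence.
  - replace (p + length a + j) with (p + (length a + j)) by lia. apply H.
    rewrite nth_error_app2 by lia. replace (length a + j - length a) with j by lia. auto.
Qed.

Lemma code_at_cons : forall prog p i l, code_at prog p (i :: l) ->
  nth_error prog p = Some i /\ code_at prog (S p) l.
Proof.
  unfold code_at; intros; split.
  - replace p with (p + 0) by lia. apply H. reflexivity.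
  - intros. replace (S p + j) with (p + S j) by lia. apply H. simpl. auto.
Qed.

Lemma step_exec : forall prog p ins s, nth_error prog p = Some ins -> s 0 = Z.of_nat p ->
  step prog s (exec ins s).
Proof. intros. exists p, ins. auto. Qed.

Lemma star_exec : forall prog p ins s u, nth_error prog p = Some ins -> s 0 = Z.of_nat p ->
  star prog (exec ins s) u -> star prog s u.
Proof. intros. eapply star_step; eauto. eapply step_exec; eauto. Qed.

Ltac ex := unfold exec; simpl length; repeat (match goal with |- context[Nat.eqb ?a ?b] => destruct (Nat.eqb_spec a b) end); try lia.

Definition regs_hold (s : state) (rs vs : list nat) := map s rs = map Z.of_nat vs.

Definition spec (f : recf) : Prop := forall vals y, reval f vals y -> forall prog args out base p s,
 code_at prog p (comp f args out base p) -> Forall (fun r => 1 <= r < base) args -> 1 <= out < base ->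
 s 0 = Z.of_nat p -> regs_hold s args vals ->
 exists t, star prog s t /\ t 0 = Z.of_nat (p + length (comp f args out base p)) /\ t out = Z.of_nat y /\
   (forall v, v <> 0 -> v <> out -> v < base -> t v = s v).

Lemma regs_hold_frame : forall s t rs vs, regs_hold s rs vs -> (forall r, In r rs -> t r = s r) -> regs_hold t rs vs.
Proof. unfold regs_hold; intros. rewrite <- H. apply map_ext_in. auto. Qed.

Definition recf_ind2 (P : recf -> Prop) (H0 : P RZero) (H1 : P RSucc) (H2 : forall i, P (RProj i))
  (H3 : forall f gs, P f -> Forall P gs -> P (RComp f gs))
  (H4 : forall f g, P f -> P g -> P (RPrimRec f g)) (H5 : forall f, P f -> P (RMu f)) :
  forall f, P f :=
  fix go f := match f with
  | RZero => H0 | RSucc => H1 | RProj i => H2 i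
  | RComp f gs => H3 f gs (go f) ((fix gol l := match l return Forall P l with
       | [] => Forall_nil P | g :: l' => Forall_cons g (go g) (gol l') end) gs)
  | RPrimRec f g => H4 f g (go f) (go g)
  | RMu f => H5 f (go f) end.

Lemma star1 : forall prog p ins s, nth_error prog p = Some ins -> s 0 = Z.of_nat p ->
  star prog s (exec ins s).
Proof. intros. eapply star_step. eapply step_exec; eauto. apply star_refl. Qed.

Lemma sim_zero : spec RZero.
Proof.
  intros vals y H prog args out base p s Hc Ha Ho Hs Hr. inversion H; subst. simpl in *.
  apply code_at_cons in Hc as [Hc _].
  exists (exec (ISet out 0) s). split; [eapply star1; eauto|]. split; [|split].
  - ex.
  - ex.
  - intros; ex.
Qed.

Lemma sim_succ : spec RSucc.
Proof.
  intros vals y H prog args out base p s Hc Ha Ho Hs Hr. inversion H; subst.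
  destruct args as [|a args']; [discriminate|]. simpl in *.
  injection Hr; intros Hr1 Hr2.
  apply code_at_cons in Hc as [Hc _].
  exists (exec (ICopy out a 1) s). split; [eapply star1; eauto|]. split; [|split].
  - ex.
  - ex.
  - intros; ex.
Qed.

Lemma sim_proj : forall i, spec (RProj i).
Proof.
  intros i vals y H prog args out base p s Hc Ha Ho Hs Hr. inversion H; subst. simpl in *.
  destruct (nth_error args i) as [a|] eqn:E.
  - apply code_at_cons in Hc as [Hc _].
    assert (Hv : s a = Z.of_nat (nth i vals 0)).
    { assert (X := f_equal (fun l => nth_error l i) Hr). simpl in X.
      rewrite !nth_error_map, E in X. simpl in X.
      destruct (nth_error vals i) eqn:E2; simpl in X; [|discriminate].
      injection X; intros; rewrite H0. erewrite nth_error_nth; eauto. }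
    exists (exec (ICopy out a 0) s). split; [eapply star1; eauto|]. split; [|split].
    + ex.
    + ex.
    + intros; ex.
  - apply code_at_cons in Hc as [Hc _].
    assert (Hv : nth i vals 0 = 0).
    { apply nth_error_None in E. apply nth_overflow.
      apply (f_equal (@length _)) in Hr. rewrite !length_map in Hr. lia. }
    exists (exec (ISet out 0) s). split; [eapply star1; eauto|]. split; [|split].
    + ex.
    + ex.
    + intros; ex.
Qed.

Lemma sim_list : forall gs vals ys, reval_list gs vals ys -> Forall spec gs -> forall prog args t b p s,
 code_at prog p (compl comp gs args t b p) -> Forall (fun r => 1 <= r < t) args -> 1 <= t ->
 t + length gs <= b -> s 0 = Z.of_nat p -> regs_hold s args vals ->
 exists u, star prog s u /\ u 0 = Z.of_nat (p + length (compl comp gs args t b p)) /\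
   regs_hold u (seq t (length gs)) ys /\
   (forall v, v <> 0 -> v < b -> (v < t \/ t + length gs <= v) -> u v = s v).
Proof.
  intros gs vals ys H. induction H; intros HF prog args0 t b p s Hc Ha Ht Hb Hs Hr.
  - exists s. simpl. repeat split; auto. apply star_refl. rewrite Hs. f_equal; lia.
  - inversion HF; subst. simpl in Hc. apply code_at_app in Hc as [Hc1 Hc2].
    simpl in Hb.
    destruct (H3 _ _ H prog args0 t b p s Hc1) as [u1 [S1 [P1 [O1 F1]]]]; auto.
    { eapply Forall_impl; [|exact Ha]. simpl; intros; lia. }
    lia.
    destruct (IHreval_list H4 prog args0 (S t) b _ u1 Hc2) as [u2 [S2 [P2 [O2 F2]]]]; auto.
    { eapply Forall_impl; [|exact Ha]. simpl; intros; lia. }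
    lia.
    { eapply regs_hold_frame; eauto. intros r Hin. rewrite Forall_forall in Ha.
      specialize (Ha r Hin). apply F1; lia. }
    exists u2. split; [eapply star_trans; eauto|]. split; [|split].
    + rewrite P2. simpl. rewrite length_app. f_equal. lia.
    + unfold regs_hold in *. simpl. rewrite O2. f_equal. rewrite F2 by lia. auto.
    + intros. simpl in *. rewrite F2 by lia. apply F1; lia.
Qed.

Lemma Forall_seq : forall a m, 1 <= a -> Forall (fun r => 1 <= r < a + m) (seq a m).
Proof. intros. rewrite Forall_forall. intros r Hr. apply in_seq in Hr. lia. Qed.

Lemma sim_comp : forall f gs, spec f -> Forall spec gs -> spec (RComp f gs).
Proof.
  intros f gs Hf Hgs vals y H prog args out base p s Hc Ha Ho Hs Hr.
  inversion H as [| | |? ? ? ys ? HL Hf0 | | |]; subst.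
  simpl in Hc |- *. apply code_at_app in Hc as [Hc1 Hc2].
  destruct (sim_list _ _ _ HL Hgs prog args base (base + length gs) p s Hc1) as [u1 [S1 [P1 [O1 F1]]]]; auto.
  all: try lia.
  edestruct (Hf _ _ Hf0 prog _ out _ _ u1 Hc2) as [u2 [S2 [P2 [O2 F2]]]]; auto.
  all: try (apply Forall_seq; lia); try lia.
  exists u2. split; [eapply star_trans; eauto|]. split; [|split]; auto.
  - rewrite P2, length_app. f_equal. lia.
  - intros. rewrite F2 by lia. apply F1; lia.
Qed.

Ltac exz := unfold exec; simpl length;
  repeat (match goal with
          | |- context[Nat.eqb ?a ?b] => destruct (Nat.eqb_spec a b)
          | |- context[Z.eqb ?a ?b] => destruct (Z.eqb_spec a b)
          end); try lia.

Lemma sim_mu : forall f, spec f -> spec (RMu f).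
Proof.
  intros f Hf vals y H prog args out base p s Hc Ha Ho Hs Hr.
  inversion H as [| | | | | | ? ? ? H0 Hlt]; subst.
  simpl in Hc |- *.
  set (cf := comp f (base :: args) (S base) (base + 2) (S p)) in *.
  apply code_at_cons in Hc as [Hc0 Hc].
  apply code_at_app in Hc as [Hcf Hc].
  apply code_at_cons in Hc as [Hj1 Hc].
  apply code_at_cons in Hc as [Hj2 Hc].
  apply code_at_cons in Hc as [Hj3 Hc].
  apply code_at_cons in Hc as [Hj4 _].
  assert (Ha2 : Forall (fun r => 1 <= r < base + 2) (base :: args)).
  { constructor. lia. eapply Forall_impl; [|exact Ha]. simpl; intros; lia. }
  assert (Loop : forall j, j <= y -> exists u, star prog s u /\ u 0 = Z.of_nat (S p) /\
            u base = Z.of_nat j /\ (forall v, v <> 0 -> v < base -> u v = s v)).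
  { induction j; intros Hj.
    - exists (exec (ISet base 0) s). split; [eapply star1; eauto|]. split; [|split].
      + exz.
      + exz.
      + intros; exz.
    - destruct IHj as [u [S1 [P1 [K1 F1]]]]; [lia|].
      destruct (Hlt j) as [m Hm]; [lia|].
      destruct (Hf _ _ Hm prog (base :: args) (S base) (base+2) (S p) u Hcf Ha2) as [u2 [S2 [P2 [O2 F2]]]]; auto.
      lia.
      { unfold regs_hold in *. simpl. rewrite K1. f_equal. rewrite <- Hr. apply map_ext_in.
        intros r Hin. rewrite Forall_forall in Ha. apply F1; specialize (Ha r Hin); lia. }
      fold cf in P2, S2.
      exists (exec (IJmp (S p)) (exec (ICopy base base 1) (exec (IJz (S base) (S p + length cf + 3)) u2))).
      split; [|split; [|split]].
      + eapply star_trans; [exact S1|]. eapply star_trans; [exact S2|].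
        eapply star_exec; [exact Hj1| exact P2 |].
        eapply star_exec; [exact Hj2| exz |].
        eapply star1; [exact Hj3| exz].
      + exz.
      + exz. rewrite F2 by lia. lia.
      + intros. exz. rewrite F2 by lia. auto. }
  destruct (Loop y (le_n _)) as [u [S1 [P1 [K1 F1]]]].
  destruct (Hf _ _ H0 prog (base :: args) (S base) (base+2) (S p) u Hcf Ha2) as [u2 [S2 [P2 [O2 F2]]]]; auto.
  lia.
  { unfold regs_hold in *. simpl. rewrite K1. f_equal. rewrite <- Hr. apply map_ext_in.
    intros r Hin. rewrite Forall_forall in Ha. apply F1; specialize (Ha r Hin); lia. }
  fold cf in P2, S2.
  exists (exec (ICopy out base 0) (exec (IJz (S base) (S p + length cf + 3)) u2)).
  split; [|split; [|split]].
  - eapply star_trans; [exact S1|]. eapply star_trans; [exact S2|].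
    eapply star_exec; [exact Hj1| exact P2 |].
    eapply star1; [exact Hj4| exz].
  - rewrite length_app. exz.
  - exz. rewrite F2 by lia. lia.
  - intros. exz. rewrite F2 by lia. auto.
Qed.

Lemma len5 : forall A (l : list A) a b c d e, length (l ++ [a;b;c;d;e]) = length l + 5.
Proof. intros. rewrite length_app. reflexivity. Qed.

Lemma sim_prim : forall f g, spec f -> spec g -> spec (RPrimRec f g).
Proof.
  intros f g Hf Hg vals y H prog args out base p s Hc Ha Ho Hs Hr.
  destruct vals as [|K rest]; [inversion H|].
  destruct args as [|kr rr]; [discriminate Hr|].
  unfold regs_hold in Hr; simpl in Hr; injection Hr; clear Hr; intros Hr HK.
  inversion Ha as [|? ? Hkr Harr]; subst.
  simpl in Hc |- *.
  set (cf := comp f rr (S base) (base + 4) (p + 2)) in *.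
  set (cg := comp g (base :: S base :: rr) (base + 3) (base + 4) (S (p + 2 + length cf))) in *.
  apply code_at_cons in Hc as [Hc0 Hc].
  apply code_at_cons in Hc as [Hc1 Hc].
  apply code_at_app in Hc as [Hcf Hc].
  apply code_at_cons in Hc as [Hjz Hc].
  apply code_at_app in Hc as [Hcg Hc].
  apply code_at_cons in Hc as [Hj1 Hc].
  apply code_at_cons in Hc as [Hj2 Hc].
  apply code_at_cons in Hc as [Hj3 Hc].
  apply code_at_cons in Hc as [Hj4 Hc].
  apply code_at_cons in Hc as [Hj5 _].
  replace (S (S p)) with (p + 2) in Hcf by lia.
  replace (S (S (S p) + length cf)) with (S (p + 2 + length cf)) in Hcg by lia.
  assert (Loop : forall j r, j <= K -> reval (RPrimRec f g) (j :: rest) r ->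
     exists u, star prog s u /\ u 0 = Z.of_nat (p + 2 + length cf) /\ u base = Z.of_nat j /\
       u (S base) = Z.of_nat r /\ u (base + 2) = Z.of_nat (K - j) /\
       (forall v, v <> 0 -> v < base -> u v = s v)).
  { induction j; intros r Hj Hev.
    - inversion Hev; subst.
      match goal with Hx : reval f rest r |- _ => rename Hx into Hfr end.
      set (s2 := exec (ICopy (base + 2) kr 0) (exec (ISet base 0) s)).
      destruct (Hf _ _ Hfr prog rr (S base) (base+4) (p+2) s2 Hcf) as [u [S1 [P1 [O1 F1]]]].
      { eapply Forall_impl; [|exact Harr]. simpl; intros; lia. }
      lia.
      { subst s2. exz. }
      { unfold regs_hold. rewrite <- Hr. apply map_ext_in. intros rx Hin.
        rewrite Forall_forall in Harr. specialize (Harr rx Hin). subst s2. exz. }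
      fold cf in S1, P1.
      exists u. split; [|split; [|split; [|split; [|split]]]].
      + eapply star_exec; [exact Hc0|exact Hs|]. eapply star_exec; [exact Hc1| exz|]. exact S1.
      + exact P1.
      + rewrite F1 by lia. subst s2. exz.
      + exact O1.
      + rewrite F1 by lia. subst s2. exz.
      + intros. rewrite F1 by lia. subst s2. exz.
    - inversion Hev; subst.
      match goal with Hx : reval (RPrimRec f g) (j :: rest) ?r' |- _ => rename Hx into Hpr end.
      match goal with Hx : reval g (j :: ?r' :: rest) r |- _ => rename Hx into Hgr end.
      destruct (IHj _ ltac:(lia) Hpr) as [u [S1 [P1 [K1 [R1 [D1 F1]]]]]].
      set (u3 := exec (IJz (base + 2) (S (p + 2 + length cf) + length cg + 4)) u).
      destruct (Hg _ _ Hgr prog (base :: S base :: rr) (base+3) (base+4) (S (p + 2 + length cf)) u3 Hcg)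
        as [u4 [S4 [P4 [O4 F4]]]].
      { constructor; [lia|]. constructor; [lia|]. eapply Forall_impl; [|exact Harr]. simpl; intros; lia. }
      lia.
      { subst u3. exz. }
      { unfold regs_hold. simpl. f_equal; [subst u3; exz|]. f_equal; [subst u3; exz|].
        rewrite <- Hr. apply map_ext_in. intros rx Hin.
        rewrite Forall_forall in Harr. specialize (Harr rx Hin). subst u3. exz. apply F1; lia. }
      fold cg in S4, P4.
      exists (exec (IJmp (p + 2 + length cf)) (exec (ICopy (base + 2) (base + 2) (-1))
         (exec (ICopy base base 1) (exec (ICopy (S base) (base + 3) 0) u4)))).
      split; [|split; [|split; [|split; [|split]]]].
      + eapply star_trans; [exact S1|].
        eapply star_exec; [exact Hjz| rewrite P1; f_equal; lia|].
        eapply star_trans; [exact S4|].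
        eapply star_exec; [exact Hj1| rewrite P4; f_equal; lia|].
        eapply star_exec; [exact Hj2| exz|].
        eapply star_exec; [exact Hj3| exz|].
        eapply star1; [exact Hj4| exz].
      + exz.
      + exz. rewrite F4 by lia. subst u3. exz.
      + exz.
      + exz. rewrite F4 by lia. subst u3. exz.
      + intros. exz. rewrite F4 by lia. subst u3. exz. apply F1; lia. }
  destruct (Loop K y (le_n _) H) as [u [S1 [P1 [K1 [R1 [D1 F1]]]]]].
  exists (exec (ICopy out (S base) 0) (exec (IJz (base + 2) (S (p + 2 + length cf) + length cg + 4)) u)).
  split; [|split; [|split]].
  - eapply star_trans; [exact S1|].
    eapply star_exec; [exact Hjz| rewrite P1; f_equal; lia|].
    eapply star1; [exact Hj5| exz].
  - exz. rewrite length_app; simpl length; rewrite length_app; simpl length; lia.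
  - exz.
  - intros. exz. apply F1; lia.
Qed.

Lemma sim_all : forall f, spec f.
Proof.
  apply recf_ind2.
  - exact sim_zero.
  - exact sim_succ.
  - exact sim_proj.
  - exact sim_comp.
  - exact sim_prim.
  - exact sim_mu.
Qed.

Definition wr_ok (lo : nat) (ins : instr) : Prop :=
  match ins with ISet r _ | ICopy r _ _ => lo <= r | _ => True end.

Lemma compl_wr : forall lo gs, Forall (fun g => forall args out base p, lo <= out -> lo <= base ->
    Forall (wr_ok lo) (comp g args out base p)) gs ->
  forall args t b p, lo <= t -> lo <= b -> Forall (wr_ok lo) (compl comp gs args t b p).
Proof.
  intros lo gs H. induction H; intros; simpl. constructor.
  apply Forall_app. split; auto.
Qed.

Lemma comp_wr : forall lo f args out base p, lo <= out -> lo <= base ->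
  Forall (wr_ok lo) (comp f args out base p).
Proof.
  intros lo f. pattern f. apply recf_ind2; intros; simpl.
  - repeat constructor; simpl; lia.
  - destruct args; repeat constructor; simpl; lia.
  - destruct (nth_error args i); repeat constructor; simpl; lia.
  - apply Forall_app. split.
    + apply compl_wr; auto; lia.
    + apply H; lia.
  - destruct args. repeat constructor; simpl; lia.
    constructor; [simpl; lia|]. constructor; [simpl; lia|].
    apply Forall_app; split; [apply H; lia|].
    constructor; [simpl; auto|]. apply Forall_app; split; [apply H0; lia|].
    repeat constructor; simpl; lia.
  - constructor; [simpl; lia|]. apply Forall_app; split; [apply H; lia|].
    repeat constructor; simpl; lia.
Qed.

Definition maxr (ins : instr) : nat :=
  match ins with ISet r _ => r | ICopy r x _ => Nat.max r x | IJz r _ => r | IJmp _ => 0 end.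

Definition pcE (nv i : nat) (ins : instr) : formula :=
  match ins with
  | ISet _ _ | ICopy _ _ _ => FEq (TVar nv) (TConst (Z.of_nat (S i)))
  | IJz r a => FOr (FAnd (FEq (TVar r) (TConst 0)) (FEq (TVar nv) (TConst (Z.of_nat a))))
                   (FAnd (FNot (FEq (TVar r) (TConst 0))) (FEq (TVar nv) (TConst (Z.of_nat (S i)))))
  | IJmp a => FEq (TVar nv) (TConst (Z.of_nat a))
  end.

Definition valE (ins : instr) (v : nat) : term :=
  match ins with
  | ISet r c => if Nat.eqb v r then TConst c else TVar v
  | ICopy r x c => if Nat.eqb v r then TAdd (TVar x) (TConst c) else TVar v
  | _ => TVar v
  end.

Fixpoint frameF (nv : nat) (ins : instr) (k : nat) : formula :=
  match k with
  | 0 => FTrue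
  | S k' => FAnd (FEq (TVar (nv + S k')) (valE ins (S k'))) (frameF nv ins k')
  end.

Definition clause (nv i : nat) (ins : instr) : formula :=
  FAnd (FEq (TVar 0) (TConst (Z.of_nat i))) (FAnd (pcE nv i ins) (frameF nv ins (pred nv))).

Fixpoint TRF (nv : nat) (l : list instr) (i : nat) : formula :=
  match l with
  | [] => FFalse
  | ins :: l' => FOr (clause nv i ins) (TRF nv l' (S i))
  end.

Lemma teval_valE : forall rho ins v, v <> 0 -> teval rho (valE ins v) = exec ins rho v.
Proof.
  intros. destruct ins; simpl; unfold exec;
  repeat (match goal with |- context[Nat.eqb ?a ?b] => destruct (Nat.eqb_spec a b) end); simpl; try lia; auto.
Qed.

Lemma frameF_iff : forall rho nv ins k, sat rho (frameF nv ins k) <->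
  (forall v, 1 <= v <= k -> rho (nv + v) = teval rho (valE ins v)).
Proof.
  induction k; simpl.
  - split; auto. intros; lia.
  - rewrite IHk. split.
    + intros [H1 H2] v Hv. destruct (Nat.eq_dec v (S k)); subst; auto. apply H2; lia.
    + intros H. split; [apply H; lia|]. intros; apply H; lia.
Qed.

Lemma pcE_iff : forall rho nv i ins, rho 0 = Z.of_nat i ->
  (sat rho (pcE nv i ins) <-> rho nv = exec ins rho 0).
Proof.
  intros. destruct ins; simpl; unfold exec; simpl.
  - rewrite H. split; intros; lia.
  - rewrite H. split; intros; lia.
  - destruct (Z.eqb_spec (rho r) 0); rewrite ?H; intuition lia.
  - tauto.
Qed.

Lemma clause_iff : forall rho nv i ins, 1 <= nv -> rho 0 = Z.of_nat i ->
  (sat rho (clause nv i ins) <-> forall v, v < nv -> rho (nv + v) = exec ins rho v).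
Proof.
  intros. unfold clause. simpl. rewrite pcE_iff, frameF_iff by auto. split.
  - intros [_ [H1 H2]] v Hv. destruct v. rewrite Nat.add_0_r; auto.
    rewrite H2 by lia. apply teval_valE. lia.
  - intros H1. split; auto. split.
    + rewrite <- (Nat.add_0_r nv) at 1. apply H1. lia.
    + intros. rewrite H1 by lia. symmetry. apply teval_valE. lia.
Qed.

Lemma TRF_iff : forall rho nv l i, sat rho (TRF nv l i) <->
  exists j ins, nth_error l j = Some ins /\ sat rho (clause nv (i + j) ins).
Proof.
  induction l; intros; simpl.
  - split; [tauto|]. intros [j [ins [H _]]]. destruct j; discriminate.
  - rewrite IHl. split.
    + intros [H|[j [ins [H1 H2]]]].
      * exists 0, a. rewrite Nat.add_0_r. auto.
      * exists (S j), ins. replace (i + S j) with (S i + j) by lia. auto.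
    + intros [j [ins [H1 H2]]]. destruct j.
      * left. simpl in H1. injection H1; intros; subst. rewrite Nat.add_0_r in H2. auto.
      * right. exists j, ins. replace (S i + j) with (i + S j) by lia. auto.
Qed.

Lemma exec_agree : forall nv ins a b, (forall v, v < nv -> a v = b v) -> maxr ins < nv -> 0 < nv ->
  forall v, v < nv -> exec ins a v = exec ins b v.
Proof.
  intros. destruct ins; simpl in *; unfold exec;
  repeat (match goal with |- context[Nat.eqb ?a ?b] => destruct (Nat.eqb_spec a b) end);
  rewrite ?H by lia; auto.
Qed.

Definition comb (nv : nat) (t u : state) : state := fun v => if v <? nv then t v else u (v - nv).

Lemma TRF_sound : forall nv prog t u, 1 <= nv -> (forall ins, In ins prog -> maxr ins < nv) ->
  step prog t u -> sat (comb nv t u) (TRF nv prog 0).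
Proof.
  intros nv prog t u Hnv Hm [i [ins [Hp [Hn Hu]]]].
  apply TRF_iff. exists i, ins. split; auto. rewrite Nat.add_0_l.
  assert (Hc0 : comb nv t u 0 = Z.of_nat i).
  { unfold comb. destruct (Nat.ltb_spec 0 nv); [auto|lia]. }
  apply clause_iff; auto. intros v Hv.
  assert (Hag : forall w, w < nv -> comb nv t u w = t w).
  { intros. unfold comb. destruct (Nat.ltb_spec w nv); [auto|lia]. }
  assert (Hmi : maxr ins < nv) by (apply Hm; eapply nth_error_In; eauto).
  rewrite (exec_agree nv ins _ t Hag Hmi) by lia.
  unfold comb. destruct (Nat.ltb_spec (nv + v) nv); [lia|]. subst u. f_equal. lia.
Qed.

Lemma TRF_complete : forall nv prog rho, 1 <= nv -> sat rho (TRF nv prog 0) ->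
  exists j ins, nth_error prog j = Some ins /\ rho 0 = Z.of_nat j /\
    forall v, v < nv -> rho (nv + v) = exec ins rho v.
Proof.
  intros. apply TRF_iff in H0. destruct H0 as [j [ins [H1 H2]]]. simpl in H2.
  assert (rho 0 = Z.of_nat j) by (destruct H2; auto).
  exists j, ins. split; auto. split; auto. eapply clause_iff; eauto.
Qed.

Lemma fo_mono_t : forall k k' t, k <= k' -> term_over k t -> term_over k' t.
Proof. induction t; simpl; intuition lia. Qed.

Lemma fo_mono : forall k k' f, k <= k' -> formula_over k f -> formula_over k' f.
Proof. induction f; simpl; intuition eauto using fo_mono_t. Qed.

Lemma fo_TRF : forall nv prog i, 1 <= nv -> (forall ins, In ins prog -> maxr ins < nv) ->
  formula_over (2 * nv) (TRF nv prog i).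
Proof.
  intros nv prog. induction prog; intros; simpl; auto. split.
  - assert (Hm : maxr a < nv) by (apply H0; simpl; auto).
    unfold clause. simpl. split; [lia|]. split.
    + destruct a; simpl in *; intuition lia.
    + assert (forall k, k < nv -> formula_over (2 * nv) (frameF nv a k)).
      { induction k; simpl; auto. intros. split; [|apply IHk; lia]. split; [lia|].
        destruct a; cbn [valE maxr] in *;
        try (destruct (Nat.eqb_spec (S k) r)); simpl; intuition lia. }
      apply H1. lia.
  - apply IHprog; auto. intros; apply H0; simpl; auto.
Qed.

Lemma teval_agree : forall k t a b, term_over k t -> (forall v, v < k -> a v = b v) -> teval a t = teval b t.
Proof. induction t; simpl; intros; intuition; try f_equal; auto. Qed.

Lemma sat_agree : forall k f a b, formula_over k f -> (forall v, v < k -> a v = b v) -> (sat a f <-> sat b f).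
Proof.
  induction f; simpl; intros a0 b0 Ho Hab; try tauto;
  try (destruct Ho as [H1 H2]; rewrite (teval_agree k a a0 b0 H1 Hab), (teval_agree k b a0 b0 H2 Hab); tauto).
  - rewrite (IHf a0 b0 Ho Hab); tauto.
  - destruct Ho. rewrite (IHf1 a0 b0), (IHf2 a0 b0); auto; tauto.
  - destruct Ho. rewrite (IHf1 a0 b0), (IHf2 a0 b0); auto; tauto.
  - destruct Ho. rewrite (IHf1 a0 b0), (IHf2 a0 b0); auto; tauto.
Qed.

Lemma teval_prime : forall n rho t, teval rho (prime_term n t) = teval (fun v => rho (n + v)) t.
Proof. induction t; simpl; congruence. Qed.

Lemma prime_sat : forall n rho f, sat rho (prime_formula n f) <-> sat (fun v => rho (n + v)) f.
Proof.
  induction f; simpl; rewrite ?teval_prime; try tauto.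
  all: try (rewrite IHf; tauto); try (rewrite IHf1, IHf2; tauto).
Qed.

Arguments npair : simpl never.

Fixpoint cst (n : nat) : recf := match n with 0 => RZero | S n' => RComp RSucc [cst n'] end.

Lemma comp1 : forall f g args x y, reval g args x -> reval f [x] y -> reval (RComp f [g]) args y.
Proof. intros. econstructor; [|eauto]. repeat econstructor; eauto. Qed.

Lemma comp2 : forall f g1 g2 args x1 x2 y, reval g1 args x1 -> reval g2 args x2 -> reval f [x1; x2] y ->
  reval (RComp f [g1; g2]) args y.
Proof. intros. econstructor; [|eauto]. repeat econstructor; eauto. Qed.

Lemma proj_ev : forall i args y, nth i args 0 = y -> reval (RProj i) args y.
Proof. intros; subst; constructor. Qed.

Lemma cst_ev : forall n args, reval (cst n) args n.
Proof. induction n; intros; simpl. constructor. eapply comp1; eauto. constructor. Qed.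

Definition addR := RPrimRec (RProj 0) (RComp RSucc [RProj 1]).

Lemma add_ev : forall a b, reval addR [a; b] (a + b).
Proof.
  induction a; intros.
  - apply ev_prim0. apply proj_ev. reflexivity.
  - eapply ev_primS; [apply IHa|]. eapply comp1; [apply proj_ev; reflexivity|]. constructor.
Qed.

Fixpoint tri (m : nat) : nat := match m with 0 => 0 | S m' => tri m' + S m' end.

Definition triR := RPrimRec RZero (RComp addR [RProj 1; RComp RSucc [RProj 0]]).

Lemma tri_ev : forall m, reval triR [m] (tri m).
Proof.
  induction m.
  - apply ev_prim0. constructor.
  - eapply ev_primS; [apply IHm|]. eapply comp2; [apply proj_ev; reflexivity| |apply add_ev].
    eapply comp1; [apply proj_ev; reflexivity|]. constructor.
Qed.

Lemma tri_eq : forall m, tri m = m * (m + 1) / 2.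
Proof.
  intros. assert (H : 2 * tri m = m * (m + 1)).
  { induction m; simpl; [reflexivity|]. nia. }
  rewrite <- H. rewrite Nat.mul_comm. rewrite Nat.div_mul; auto.
Qed.

Definition npR := RComp addR [RComp triR [RComp addR [RProj 0; RProj 1]]; RProj 1].

Lemma np_ev : forall a b, reval npR [a; b] (npair a b).
Proof.
  intros. unfold npair. rewrite <- tri_eq. eapply comp2; [| apply proj_ev; reflexivity| apply add_ev].
  eapply comp1; [|apply tri_ev]. eapply comp2; [apply proj_ev; reflexivity| apply proj_ev; reflexivity| apply add_ev].
Qed.

Definition pr2 (x y : recf) := RComp npR [x; y].

Lemma pr2_ev : forall x y args a b, reval x args a -> reval y args b -> reval (pr2 x y) args (npair a b).
Proof. intros. eapply comp2; eauto. apply np_ev. Qed.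

Definition eqf (v : nat) (c : Z) := FEq (TVar v) (TConst c).

Definition EQR (vR cR : recf) := pr2 (cst 0) (pr2 (pr2 (cst 0) vR) (pr2 (cst 1) (RComp addR [cR; cR]))).

Lemma encZ_nat : forall n, encZ (Z.of_nat n) = n + n.
Proof.
  intros. unfold encZ. destruct (Z.leb_spec 0 (Z.of_nat n)); [|lia]. rewrite Nat2Z.id. lia.
Qed.

Lemma EQR_ev : forall vR cR args v n, reval vR args v -> reval cR args n ->
  reval (EQR vR cR) args (enc_formula (eqf v (Z.of_nat n))).
Proof.
  intros. unfold EQR, eqf. simpl enc_formula. simpl enc_term. rewrite encZ_nat.
  apply pr2_ev; [apply cst_ev|]. apply pr2_ev; (apply pr2_ev; [apply cst_ev|]); auto.
  eapply comp2; eauto. apply add_ev.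
Qed.

Definition ANDR (a b : recf) := pr2 (cst 6) (pr2 a b).

Lemma ANDR_ev : forall a b args f g, reval a args (enc_formula f) -> reval b args (enc_formula g) ->
  reval (ANDR a b) args (enc_formula (FAnd f g)).
Proof. intros. simpl. apply pr2_ev; [apply cst_ev|]. apply pr2_ev; auto. Qed.

Fixpoint Zs (k : nat) : formula := match k with 0 => FTrue | S k' => FAnd (eqf (4 + k') 0%Z) (Zs k') end.

Definition ZsR := RPrimRec (pr2 (cst 3) (cst 0)) (ANDR (EQR (RComp addR [cst 4; RProj 0]) (cst 0)) (RProj 1)).

Lemma Zs_ev : forall k, reval ZsR [k] (enc_formula (Zs k)).
Proof.
  induction k.
  - apply ev_prim0. apply pr2_ev; apply cst_ev.
  - eapply ev_primS; [apply IHk|]. simpl Zs. apply ANDR_ev; [|apply proj_ev; reflexivity].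
    apply (EQR_ev _ _ _ (4 + k) 0); [|apply cst_ev].
    eapply comp2; [apply cst_ev| apply proj_ev; reflexivity| apply add_ev].
Qed.

Definition InitF (M E : nat) : formula :=
  FAnd (eqf 0 0) (FAnd (eqf 1 0) (FAnd (eqf 2 (Z.of_nat M)) (FAnd (eqf 3 (Z.of_nat E)) (Zs M)))).

Definition initR := ANDR (EQR (cst 0) (cst 0)) (ANDR (EQR (cst 1) (cst 0))
   (ANDR (EQR (cst 2) (RProj 0)) (ANDR (EQR (cst 3) (RProj 1)) (RComp ZsR [RProj 0])))).

Definition PF : formula := FNot (eqf 1 1).
Definition PR := pr2 (cst 5) (EQR (cst 1) (cst 1)).

Definition hR := pr2 (RComp addR [RProj 0; cst 4]) (pr2 initR (pr2 (RProj 1) PR)).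

Lemma h_ev : forall M TR', reval hR [M; enc_formula TR']
   (enc_input (mkTS (M + 4) (InitF M (enc_formula TR')) TR') PF).
Proof.
  intros. unfold enc_input, hR. simpl nv. simpl Init. simpl TR.
  apply pr2_ev. { eapply comp2; [apply proj_ev; reflexivity| apply cst_ev| apply add_ev]. }
  apply pr2_ev.
  - unfold initR, InitF.
    apply ANDR_ev; [apply (EQR_ev _ _ _ 0 0); apply cst_ev|].
    apply ANDR_ev; [apply (EQR_ev _ _ _ 1 0); apply cst_ev|].
    apply ANDR_ev; [apply EQR_ev; [apply cst_ev| apply proj_ev; reflexivity]|].
    apply ANDR_ev; [apply EQR_ev; [apply cst_ev| apply proj_ev; reflexivity]|].
    eapply comp1; [apply proj_ev; reflexivity| apply Zs_ev].
  - apply pr2_ev; [apply proj_ev; reflexivity|].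
    unfold PR, PF. simpl enc_formula at 1. apply pr2_ev; [apply cst_ev|].
    apply (EQR_ev _ _ _ 1 1); apply cst_ev.
Qed.

Definition maxregs (l : list instr) : nat := fold_right (fun i m => Nat.max (maxr i) m) 0 l.

Lemma maxregs_In : forall l ins, In ins l -> maxr ins <= maxregs l.
Proof. induction l; simpl; intros; [tauto|]. destruct H; subst; [lia|]. specialize (IHl _ H). lia. Qed.

Definition gR (d : recf) := RComp d [hR].
Definition gcode (d : recf) := comp (gR d) [2;3] 4 5 0.
Definition progd (d : recf) := gcode d ++ [ICopy 1 4 0].
Definition Mv (d : recf) := S (maxregs (progd d)).
Definition nvv (d : recf) := Mv d + 4.
Definition TRd (d : recf) := TRF (nvv d) (progd d) 0.
Definition Ed (d : recf) := enc_formula (TRd d).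
Definition TSd (d : recf) := mkTS (nvv d) (InitF (Mv d) (Ed d)) (TRd d).
Definition s0 (d : recf) : state := fun v =>
  if Nat.eqb v 2 then Z.of_nat (Mv d) else if Nat.eqb v 3 then Z.of_nat (Ed d) else 0%Z.

Arguments gcode : simpl never.
Arguments progd : simpl never.
Arguments Mv : simpl never.
Arguments Ed : simpl never.
Arguments TRd : simpl never.
Arguments nvv : simpl never.

Lemma maxr_bound : forall d ins, In ins (progd d) -> maxr ins < nvv d.
Proof. intros. apply maxregs_In in H. unfold nvv, Mv. lia. Qed.

Lemma Zs_over : forall k n, k + 4 <= n -> formula_over n (Zs k).
Proof. induction k; simpl; auto. intros. split; [split; auto; lia|]. apply IHk; lia. Qed.

Lemma Zs_sat : forall rho k, sat rho (Zs k) <-> forall j, j < k -> rho (4 + j) = 0%Z.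
Proof.
  induction k; simpl. split; auto; intros; lia.
  rewrite IHk. split.
  - intros [H1 H2] j Hj. destruct (Nat.eq_dec j k); subst; auto. apply H2; lia.
  - intros H. split; [apply H; lia|]. intros; apply H; lia.
Qed.

Lemma wf_d : forall d, input_wf (TSd d) PF.
Proof.
  intros. unfold input_wf, ts_wf. split; [split|].
  - change (formula_over (nvv d) (InitF (Mv d) (Ed d))). unfold InitF, nvv.
    cbn [formula_over term_over eqf]. 
    assert (forall n, 4 <= n -> (0 < n /\ True) /\ (1 < n /\ True) /\ (2 < n /\ True) /\ (3 < n /\ True)) by (intros; repeat split; lia).
    
    split; [|split; [|split; [|split]]]; try (apply H; lia). apply Zs_over. lia. 
  - change (formula_over (2 * nvv d) (TRd d)). unfold TRd. apply fo_TRF. unfold nvv; lia. apply maxr_bound.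
  - change (formula_over (nvv d) PF). unfold PF, nvv. cbn [formula_over term_over eqf]. lia.
Qed.

Lemma init_sat : forall d, sat (s0 d) (Init (TSd d)).
Proof.
  intros. change (sat (s0 d) (InitF (Mv d) (Ed d))). unfold InitF.
  cbn [sat teval eqf]. unfold s0 at 1 2 3 4. cbn [Nat.eqb].
  split; [reflexivity|]. split; [reflexivity|]. split; [reflexivity|]. split; [reflexivity|].
  apply Zs_sat. intros. unfold s0.
  destruct (Nat.eqb_spec (4 + j) 2); [lia|]. destruct (Nat.eqb_spec (4 + j) 3); [lia|]. auto.
Qed.

Lemma init_pin : forall d rho, sat rho (Init (TSd d)) -> forall v, v < nvv d -> rho v = s0 d v.
Proof.
  intros d rho H v Hv. change (sat rho (InitF (Mv d) (Ed d))) in H. unfold InitF in H.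
  cbn [sat teval eqf] in H.
  destruct H as [H0 [H1 [H2 [H3 H4]]]]. rewrite Zs_sat in H4. unfold s0.
  destruct (Nat.eqb_spec v 2); subst; auto. destruct (Nat.eqb_spec v 3); subst; auto.
  destruct v as [|[|[|[|v']]]]; auto; try lia.
  replace (S (S (S (S v')))) with (4 + v') by lia. apply H4. unfold nvv in Hv. lia.
Qed.
Lemma code_at_prefix : forall l1 l2, code_at (l1 ++ l2) 0 l1.
Proof. unfold code_at; intros. simpl. rewrite nth_error_app1; auto. apply nth_error_Some. congruence. Qed.

Lemma s0_regs : forall d, regs_hold (s0 d) [2;3] [Mv d; Ed d].
Proof. intros. unfold regs_hold. cbn [map]. unfold s0. cbn [Nat.eqb]. reflexivity. Qed.

Lemma run : forall d y, reval (gR d) [Mv d; Ed d] y ->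
  exists sf, star (progd d) (s0 d) sf /\ sf 0 = Z.of_nat (length (progd d)) /\ sf 1 = Z.of_nat y.
Proof.
  intros d y H.
  destruct (sim_all (gR d) _ _ H (progd d) [2;3] 4 5 0 (s0 d)) as [t [S1 [P1 [O1 F1]]]].
  - unfold progd, gcode. apply code_at_prefix.
  - repeat constructor; lia.
  - lia.
  - reflexivity.
  - apply s0_regs.
  - fold (gcode d) in P1.
    assert (Hn : nth_error (progd d) (length (gcode d)) = Some (ICopy 1 4 0)).
    { unfold progd. rewrite nth_error_app2 by lia. rewrite Nat.sub_diag. reflexivity. }
    
    assert (F11 : t 1 = 0%Z) by (rewrite F1 by lia; reflexivity).
    exists (exec (ICopy 1 4 0) t). split; [|split].
    + eapply star_trans; [exact S1|]. eapply star1; eauto.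
    + unfold progd. rewrite length_app. unfold exec. cbn [Nat.eqb]. rewrite P1. cbn [length]. lia.
    + unfold exec. cbn [Nat.eqb]. rewrite O1. lia.
Qed.
Definition final (prog : list instr) (s : state) := forall u, ~ step prog s u.

Lemma final_len : forall prog s, s 0 = Z.of_nat (length prog) -> final prog s.
Proof.
  intros prog s H u [i [ins [H1 [H2 _]]]]. rewrite H in H1. apply Nat2Z.inj in H1. subst.
  rewrite (proj2 (nth_error_None prog (length prog))) in H2 by lia. discriminate.
Qed.

Lemma step_det : forall prog s a b, step prog s a -> step prog s b -> a = b.
Proof.
  intros prog s a b [i [ins [H1 [H2 H3]]]] [i' [ins' [H1' [H2' H3']]]].
  rewrite H1 in H1'. apply Nat2Z.inj in H1'. subst. congruence.
Qed.

Lemma star_unique : forall prog s b, star prog s b -> forall a, star prog s a -> final prog a -> star prog b a.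
Proof.
  intros prog s b H. induction H; intros; auto.
  inversion H1; subst. exfalso; eapply H2; eauto.
  apply IHstar; auto. rewrite (step_det _ _ _ _ H H3). auto.
Qed.

Lemma star_finite : forall prog s sf, star prog s sf -> final prog sf ->
  exists L, (forall t, star prog s t -> In t L) /\ (forall t, In t L -> star prog s t).
Proof.
  intros prog s sf H. induction H; intros Hf.
  - exists [s]. split.
    + intros. inversion H; subst; simpl; auto. exfalso; eapply Hf; eauto.
    + simpl; intros t [<-|[]]. apply star_refl.
  - destruct (IHstar Hf) as [L [HL1 HL2]]. exists (s :: L). split.
    + intros t0 Ht. inversion Ht as [|? t1 ? Hs1 Hs2]; subst; simpl; auto. right. apply HL1.
      rewrite (step_det _ _ _ _ H Hs1). auto.
    + simpl. intros t0 [<-|Hin]. apply star_refl. eapply star_step; eauto.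
Qed.

Lemma flag_inv : forall d a b, star (progd d) a b ->
  (a 0 <> Z.of_nat (length (progd d)) -> a 1 = 0%Z) ->
  (b 0 <> Z.of_nat (length (progd d)) -> b 1 = 0%Z).
Proof.
  intros d a b H. induction H; auto. intros Ha. apply IHstar.
  destruct H as [i [ins [H1 [H2 H3]]]]. subst t.
  assert (Hlen : length (progd d) = length (gcode d) + 1) by (unfold progd; rewrite length_app; auto).
  assert (Hi : i < length (progd d)) by (apply nth_error_Some; congruence).
  
  destruct (Nat.eq_dec i (length (gcode d))).
  - subst i. unfold progd in H2. rewrite nth_error_app2 in H2 by lia. rewrite Nat.sub_diag in H2.
    cbn [nth_error] in H2. injection H2 as <-. intros Hc. exfalso. apply Hc.
    unfold exec. cbn [Nat.eqb]. rewrite H1, Hlen. lia.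
  - unfold progd in H2. rewrite nth_error_app1 in H2 by lia.
    assert (Hw : wr_ok 4 ins).
    { assert (X := comp_wr 4 (gR d) [2;3] 4 5 0 ltac:(lia) ltac:(lia)). rewrite Forall_forall in X.
      apply X. unfold gcode in H2. exact (nth_error_In _ _ H2). }
    
    intros _. assert (s 1 = 0%Z) by (apply Ha; rewrite H1; lia).
    
    destruct ins; simpl in Hw; unfold exec; try rewrite (proj2 (Nat.eqb_neq 1 r)) by lia; cbn [Nat.eqb]; auto.
Qed.

Fixpoint pinF (t : state) (k : nat) : formula :=
  match k with 0 => FTrue | S k' => FAnd (FEq (TVar k') (TConst (t k'))) (pinF t k') end.

Definition disjF (nv : nat) (L : list state) : formula := fold_right (fun t acc => FOr (pinF t nv) acc) FFalse L.

Lemma pinF_sat : forall rho t k, sat rho (pinF t k) <-> forall v, v < k -> rho v = t v.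
Proof.
  induction k; simpl. split; auto; intros; lia.
  rewrite IHk. split.
  - intros [H1 H2] v Hv. destruct (Nat.eq_dec v k); subst; auto. apply H2; lia.
  - intros H. split; [apply H; lia|]. intros; apply H; lia.
Qed.

Lemma disjF_sat : forall rho nv L, sat rho (disjF nv L) <-> exists t, In t L /\ forall v, v < nv -> rho v = t v.
Proof.
  induction L; simpl. split; [tauto|]. intros [t [[] _]].
  rewrite pinF_sat, IHL. split.
  - intros [H|[t [H1 H2]]]; eauto.
  - intros [t [[<-|H1] H2]]; eauto.
Qed.

Lemma disjF_over : forall nv L, formula_over nv (disjF nv L).
Proof.
  induction L; simpl; auto. split; auto. clear IHL.
  assert (forall k, k <= nv -> formula_over nv (pinF a k)). { induction k; simpl; auto. intros; split; [split; auto; lia|]. apply IHk; lia. }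
  apply H; lia.
Qed.

Theorem mainTheorem1 : ~ exists f : recf, decides_invariant_existence f.
Proof.
  intros [d Hd].
  destruct (Hd (TSd d) PF (wf_d d)) as [Hyes Hno].
  assert (Hh : reval hR [Mv d; Ed d] (enc_input (TSd d) PF)) by (unfold Ed, TSd, nvv; apply h_ev).
  assert (Hnv : 1 <= nvv d) by (unfold nvv; lia).
  
  destruct (classic (has_QFLIA_invariant (TSd d) PF)) as [Hi|Hi].
  - assert (Hg : reval (gR d) [Mv d; Ed d] 1) by (eapply comp1; [exact Hh| apply Hyes; exact Hi]).
    destruct (run d 1 Hg) as [sf [S1 [P1 F1]]].
    destruct Hi as [I [Hfo [Hinit [Hind Hp]]]].
    change (formula_over (nvv d) I) in Hfo.
    
    assert (Hall : forall a b, star (progd d) a b -> sat a I -> sat b I).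
    { intros a b H. induction H; auto. intros Ha. apply IHstar.
      set (rho := comb (nvv d) s t).
      assert (Hr1 : sat rho I).
      { rewrite (sat_agree _ _ rho s Hfo); auto. intros. unfold rho, comb.
        destruct (Nat.ltb_spec v (nvv d)); [auto|lia]. }
      assert (Hr2 : sat rho (TR (TSd d))).
      { change (sat rho (TRF (nvv d) (progd d) 0)). apply TRF_sound; auto. apply maxr_bound. }
      assert (Hr3 := Hind rho (conj Hr1 Hr2)).
      change (sat rho (prime_formula (nvv d) I)) in Hr3.
      apply prime_sat in Hr3. rewrite (sat_agree _ _ _ t Hfo) in Hr3; auto.
      intros. unfold rho, comb. destruct (Nat.ltb_spec (nvv d + v) (nvv d)); [lia|]. f_equal. lia. }
    
    assert (Hsf : sat sf I).
    { apply (Hall (s0 d)); auto. apply Hinit. apply init_sat. }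
    apply (Hp sf Hsf). cbn [sat teval eqf]. rewrite F1. reflexivity.
  - assert (Hg : reval (gR d) [Mv d; Ed d] 0) by (eapply comp1; [exact Hh| apply Hno; exact Hi]).
    destruct (run d 0 Hg) as [sf [S1 [P1 F1]]].
    assert (Hfin : final (progd d) sf) by (apply final_len; auto).
    destruct (star_finite _ _ _ S1 Hfin) as [L [HL1 HL2]].
    
    apply Hi. exists (disjF (nvv d) L). split; [|split; [|split]].
    + apply disjF_over.
    + intros rho Hr. apply disjF_sat. exists (s0 d). split.
      * apply HL1. apply star_refl.
      * apply init_pin; auto.
    + intros rho [H1 H2]. apply disjF_sat in H1. destruct H1 as [t [Ht Hag]].
      change (sat rho (TRF (nvv d) (progd d) 0)) in H2.
      destruct (TRF_complete _ _ _ Hnv H2) as [j [ins [Hj [Hr0 Hex]]]].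
      assert (Hm : maxr ins < nvv d) by (apply maxr_bound; eapply nth_error_In; eauto).
      change (sat rho (prime_formula (nvv d) (disjF (nvv d) L))).
      apply prime_sat. apply disjF_sat. exists (exec ins t). split.
      * apply HL1. eapply star_trans; [apply HL2; exact Ht|]. eapply star1; eauto.
        rewrite <- Hag by lia. auto.
      * intros v Hv. rewrite Hex by auto. apply exec_agree with (nvv d); auto; lia.
    + intros rho H1. apply disjF_sat in H1. destruct H1 as [t [Ht Hag]].
      unfold PF, eqf. cbn [sat teval]. rewrite Hag by (unfold nvv; lia).
      assert (Hst : star (progd d) (s0 d) t) by (apply HL2; auto).
      destruct (Z.eq_dec (t 0) (Z.of_nat (length (progd d)))) as [E|E].
      * assert (Hts : star (progd d) t sf) by (eapply star_unique; eauto).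
        assert (t = sf).
        { inversion Hts as [|? t1 ? Hs1 Hs2]; subst; auto. exfalso. eapply (final_len (progd d) t E); eauto. }
        subst. rewrite F1. simpl. lia.
      * rewrite (flag_inv d (s0 d) t Hst) by (auto; intros; reflexivity). lia.
Qed.
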